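(* Let $d,n$ be positive integers with $d\le n$. If $S\subseteq\mathbb{Z}_{2^n}$ is a union of some of the layers $L_1,\dots,L_{n+1}$ and $|S|>|\mathcal{C}_d|$, then $S$ contains a projective $d$-cube, i.e.\ there is a multiset $T$ of $d$ elements of $\mathbb{Z}_{2^n}$ with $\Sigma^*T\subseteq S$.
   Context: For a multiset $T=\{a_1,\dots,a_d\}$ of (not necessarily distinct) elements of $\mathbb{Z}_{2^n}$, $\Sigma^*T=\{\sum_{i\in I}a_i \bmod 2^n:\emptyset\ne I\subseteq[d]\}$. Layers: for $1\le i\le n$, $L_i=\{x\in\mathbb{Z}_{2^n}: x\equiv 2^{i-1}\pmod{2^i}\}$, $L_{n+1}=\{0\}$. Define index sets $I_1=\emptyset$ and, for $d\ge2$ with $\ell$ the largest integer with $2^\ell\le d$, $I_d=\{1,\dots,\ell\}\cup\{j+\ell+1: j\in I_{d-2^\ell+1}\}$; set $\mathcal{C}_d=\bigcup_{i\in I_d}L_i$ (for $d\le n$ all indices are at most $n$). *)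

(* Defs.v *)
From mathcomp Require Import all_boot.
Set Implicit Arguments. Unset Strict Implicit. Unset Printing Implicit Defensive.

Definition layer (n i : nat) : {set 'I_(2 ^ n)} :=
  if i == n.+1 then [set x : 'I_(2 ^ n) | val x == 0]
  else [set x : 'I_(2 ^ n) | val x %% 2 ^ i == 2 ^ i.-1].

(* Index sets I_d, computed with fuel k (fuel d suffices since the
   argument strictly decreases). *)
Fixpoint Iaux (k d : nat) : seq nat :=
  match k with
  | 0 => [::]
  | k'.+1 =>
      if d <= 1 then [::]
      else let l := trunc_log 2 d in
           iota 1 l ++ map (fun j => j + l + 1) (Iaux k' (d - 2 ^ l + 1))
  end.

Definition Iset (d : nat) : seq nat := Iaux d d.

Definition Cset (n d : nat) : {set 'I_(2 ^ n)} := \bigcup_(i <- Iset d) layer n i.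

Definition union_of_layers (n : nat) (S : {set 'I_(2 ^ n)}) : Prop :=
  exists J : seq nat, all (fun i => (1 <= i) && (i <= n.+1)) J /\
                      S = \bigcup_(i <- J) layer n i.

Definition has_proj_cube (n d : nat) (S : {set 'I_(2 ^ n)}) : Prop :=
  exists t : 'I_d -> 'I_(2 ^ n),
    forall I : {set 'I_d}, I != set0 ->
      exists2 y : 'I_(2 ^ n), y \in S & val y = (\sum_(i in I) val (t i)) %% 2 ^ n.

(* Main.v *)
Require Import Defs.
From mathcomp Require Import all_boot zify.

Definition vmod (n x : nat) : nat := if 2 ^ n %| x then n else logn 2 x.

Lemma vchar x v : 0 < x -> 2 ^ v %| x -> ~~ (2 ^ v.+1 %| x) -> logn 2 x = v.
Proof.
move=> x0; rewrite !pfactor_dvdn // => h1 h2; lia.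
Qed.

Lemma vmod_mul k j s : vmod (k + j) (2 ^ k * s) = k + vmod j s.
Proof.
rewrite /vmod expnD dvdn_pmul2l ?expn_gt0 //.
case: ifP => // hd.
have s0 : 0 < s by case: s hd => //; rewrite dvdn0.
by rewrite lognM ?expn_gt0 // pfactorK.
Qed.

Lemma dvd_modpow d n x : d %| 2 ^ n -> (d %| x %% 2 ^ n) = (d %| x).
Proof. by move=> h; rewrite /dvdn (modn_dvdm _ h). Qed.

Lemma vmod_mod n x : vmod n (x %% 2 ^ n) = vmod n x.
Proof.
rewrite /vmod dvd_modpow //.
case: ifP => // hd.
have x0 : 0 < x by case: x hd => //; rewrite dvdn0.
have y0 : 0 < x %% 2 ^ n by rewrite lt0n; apply/negP => /eqP e; move: hd; rewrite /dvdn e.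
have hL : logn 2 x < n.
  rewrite ltnNge; apply/negP => h; move: hd; rewrite pfactor_dvdn // h //.
apply: vchar => //.
  rewrite dvd_modpow ?dvdn_exp2l ?pfactor_dvdn //; lia.
rewrite dvd_modpow ?dvdn_exp2l ?pfactor_dvdn //; lia.
Qed.

Lemma vmod_eqmod n x y : x = y %[mod 2 ^ n] -> vmod n x = vmod n y.
Proof. by move=> e; rewrite -vmod_mod e vmod_mod. Qed.

Lemma vmod1 j : vmod j 1 = 0.
Proof.
rewrite /vmod; case: j => [|j] //.
rewrite dvdn1; have -> : (2 ^ j.+1 == 1) = false by apply/negP => /eqP h; have := ltn_exp2l 0 j.+1 (isT : 1 < 2); rewrite h expn0. by rewrite logn1.
Qed.

Lemma vmod_pow a n : a <= n -> vmod n (2 ^ a) = a.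
Proof.
move=> h; have -> : n = a + (n - a) by lia.
by rewrite -(muln1 (2 ^ a)) vmod_mul vmod1 addn0.
Qed.

Lemma vmod_small n k m s : 0 < m -> m < 2 ^ k -> k <= n ->
  vmod n (m + 2 ^ k * s) = logn 2 m /\ logn 2 m < k.
Proof.
move=> m0 mk kn.
set L := logn 2 m.
have hLk : L < k.
  have : 2 ^ L <= m by apply: dvdn_leq => //; rewrite pfactor_dvdn.
  move=> h; rewrite -(ltn_exp2l _ _ (isT : 1 < 2)); lia.
have d1 : 2 ^ L %| m by rewrite pfactor_dvdn.
have d2 : ~~ (2 ^ L.+1 %| m) by rewrite pfactor_dvdn // ltnn.
have dk1 : 2 ^ L %| 2 ^ k * s by apply: dvdn_mulr; apply: dvdn_exp2l; lia.
have dk2 : 2 ^ L.+1 %| 2 ^ k * s by apply: dvdn_mulr; apply: dvdn_exp2l; lia.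
have nd : ~~ (2 ^ L.+1 %| m + 2 ^ k * s) by rewrite dvdn_addl.
split=> //.
rewrite /vmod.
have -> : (2 ^ n %| m + 2 ^ k * s) = false.
  apply/negP => h; move/negP: nd; apply; apply: dvdn_trans h; apply: dvdn_exp2l; lia.
apply: vchar; first by rewrite addn_gt0 m0.
  by rewrite dvdn_addl.
by [].
Qed.

Lemma layer_nat n i x : x < 2 ^ n ->
  (if i == n.+1 then x == 0 else x %% 2 ^ i == 2 ^ i.-1) = (i == (vmod n x).+1).
Proof.
move=> xl.
case: (posnP x) => [x0|x0].
  subst x.
  have -> : vmod n 0 = n by rewrite /vmod dvdn0.
  case: (i =P n.+1) => [//|hi].
  by rewrite mod0n eq_sym; apply/negbTE; rewrite -lt0n expn_gt0.
have nd : ~~ (2 ^ n %| x).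
  apply/negP => h; have := dvdn_leq x0 h; lia.
have -> : vmod n x = logn 2 x by rewrite /vmod (negbTE nd).
have hL : logn 2 x < n.
  rewrite ltnNge; apply/negP => h; move/negP: nd; apply; rewrite pfactor_dvdn //.
case: (i =P n.+1) => [ei|hi].
  subst i; apply/idP/idP => /eqP h; lia.
apply/idP/idP.
  case: i hi => [|j] _ /=.
    by rewrite expn0 modn1.
  move=> /eqP h; apply/eqP; congr _.+1; symmetry; apply: vchar => //.
    rewrite (divn_eq x (2 ^ j.+1)) h; apply: dvdn_add => //.
    by apply: dvdn_mull; apply: dvdn_exp2l.
  rewrite /dvdn h; rewrite -lt0n expn_gt0 //.
move=> /eqP ->; rewrite /=.
set L := logn 2 x.
have d1 : 2 ^ L %| x by rewrite pfactor_dvdn.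
have d2 : ~~ (2 ^ L.+1 %| x) by rewrite pfactor_dvdn // ltnn.
case/dvdnP: d1 => q hq.
have oq : odd q.
  apply: contraNT d2 => e.
  by rewrite hq expnS dvdn_pmul2r ?expn_gt0 // dvdn2.
apply/eqP; rewrite hq expnS -(muln_modl (2 ^ L) q 2) modn2 oq mul1n //.
Qed.

Lemma layer_vmod n i (x : 'I_(2 ^ n)) : (x \in layer n i) = (i == (vmod n x).+1).
Proof.
rewrite -layer_nat ?ltn_ord // /layer; case: (i == n.+1); by rewrite inE.
Qed.

Fixpoint W (n : nat) (P : nat -> bool) : nat :=
  match n with
  | 0 => P 0
  | n'.+1 => P 0 * 2 ^ n' + W n' (fun a => P a.+1)
  end.

Lemma eq_W n P P' : (forall a, P a = P' a) -> W n P = W n P'.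
Proof.
elim: n P P' => [|n IH] P P' h /=; first by rewrite h.
by rewrite h (IH _ (fun a => P' a.+1)).
Qed.

Lemma W_le n P : W n P <= 2 ^ n.
Proof.
elim: n P => [|n IH] P /=; first by case: (P 0).
have := IH (fun a => P a.+1); rewrite expnS; case: (P 0) => /=; lia.
Qed.

Lemma W_pos n P : 0 < W n P -> exists2 a, a <= n & P a.
Proof.
elim: n P => [|n IH] P /=; first by case h: (P 0) => // _; exists 0.
case h: (P 0); first by exists 0.
rewrite mul0n add0n => /IH [a ha pa]; exists a.+1 => //.
Qed.

Lemma sum_dbl m (f : nat -> nat) :
  \sum_(0 <= i < m.*2) f i = \sum_(0 <= i < m) f i.*2 + \sum_(0 <= i < m) f i.*2.+1.
Proof.
elim: m => [|m IH]; first by rewrite !big_geq.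
rewrite doubleS !big_nat_recr //= IH; lia.
Qed.

Lemma vmod_odd n x : vmod n.+1 (x.*2.+1) = 0.
Proof.
rewrite /vmod.
have nd : ~~ (2 ^ 1 %| x.*2.+1) by rewrite expn1 dvdn2 /= odd_double.
have -> : (2 ^ n.+1 %| x.*2.+1) = false.
  apply/negP => h; move/negP: nd; apply; apply: dvdn_trans h; exact: dvdn_exp2l.
by apply: vchar => //; rewrite expn0 dvd1n.
Qed.

Lemma cnt n (P : nat -> bool) : \sum_(0 <= x < 2 ^ n) (P (vmod n x) : nat) = W n P.
Proof.
elim: n P => [|n IH] P; first by rewrite expn0 big_nat1 /vmod expn0 dvdn0.
rewrite expnS mul2n sum_dbl /=.
rewrite (eq_bigr (fun i => (P (vmod n i).+1 : nat))); last first.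
  by move=> i _; rewrite -muln2 mulnC -(expn1 2) -(add1n n) vmod_mul.
rewrite (IH (fun a => P a.+1)).
rewrite (eq_bigr (fun i => (P 0 : nat))); last by move=> i _; rewrite vmod_odd.
rewrite sum_nat_const_nat subn0; lia.
Qed.

Lemma mem_bigcup_layers n J (x : 'I_(2 ^ n)) :
  (x \in \bigcup_(i <- J) layer n i) = ((vmod n x).+1 \in J).
Proof.
elim: J => [|i J IH]; first by rewrite big_nil inE.
by rewrite big_cons in_setU IH layer_vmod in_cons eq_sym.
Qed.

Lemma card_layers n J :
  #|\bigcup_(i <- J) layer n i| = W n (fun a => a.+1 \in J).
Proof.
rewrite -cnt -sum1_card big_mkord big_mkcond /=.
apply: eq_bigr => x _; rewrite mem_bigcup_layers; by case: (_ \in J).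
Qed.

Lemma tl_facts d : 1 < d ->
  [/\ 2 ^ trunc_log 2 d <= d, d < 2 ^ (trunc_log 2 d).+1 & 0 < trunc_log 2 d].
Proof.
move=> d1; have h1 := trunc_logP (isT : 1 < 2) (ltnW d1).
have h2 := trunc_log_ltn d (isT : 1 < 2).
split=> //; rewrite lt0n; apply/eqP => e; move: h2; rewrite e expn1; lia.
Qed.

Lemma Iaux_fuel k1 k2 d : d <= k1 -> d <= k2 -> Iaux k1 d = Iaux k2 d.
Proof.
elim: k1 k2 d => [|k1 IH] [|k2] d h1 h2 //=.
- by case: d h1 h2 => // _ _; case: ifP.
- by case: d h1 h2 => //.
case: ifP => // hd.
have d1 : 1 < d by rewrite ltnNge hd.
have [ha hb hc] := tl_facts d d1.
congr (_ ++ _); congr (map _ _); apply: IH.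
  have : 2 <= 2 ^ trunc_log 2 d by rewrite -{1}(expn1 2) leq_exp2l.
  lia.
have : 2 <= 2 ^ trunc_log 2 d by rewrite -{1}(expn1 2) leq_exp2l.
lia.
Qed.

Lemma Iaux_no0 k d : 0 \notin Iaux k d.
Proof.
elim: k d => [|k IH] d //=; case: ifP => // _.
rewrite mem_cat mem_iota negb_or /=; apply/mapP => [[j _]]; lia.
Qed.

Lemma Iset_rec d : 1 < d ->
  Iset d = iota 1 (trunc_log 2 d) ++
    map (fun j => j + trunc_log 2 d + 1) (Iset (d - 2 ^ trunc_log 2 d + 1)).
Proof.
move=> d1; have [ha hb hc] := tl_facts d d1.
have h2 : 2 <= 2 ^ trunc_log 2 d by rewrite -{1}(expn1 2) leq_exp2l.
rewrite /Iset; case: d d1 ha hb hc h2 => [|d] // d1 ha hb hc h2 /=.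
rewrite ifN; last by rewrite -ltnNge.
congr (_ ++ map _ _); apply: Iaux_fuel; lia.
Qed.

Definition Qd d a := a.+1 \in Iset d.

Lemma Qd1 a : Qd 1 a = false.
Proof. by []. Qed.

Lemma Qd_rec d a : 1 < d ->
  Qd d a = (a < trunc_log 2 d) ||
           ((trunc_log 2 d < a) && Qd (d - 2 ^ trunc_log 2 d + 1) (a - (trunc_log 2 d).+1)).
Proof.
move=> d1; rewrite /Qd Iset_rec // mem_cat mem_iota add1n ltnS.
set l := trunc_log 2 d; set s := Iset _; rewrite ltnS /=.
have [al|la] := ltnP a l; first by [].
rewrite /=.
have [la'|al'] := ltnP l a.
  have -> : a.+1 = (a - l) + l + 1 by lia.
  have inj : injective (fun j => j + l + 1) by move=> x y /= /eqP; rewrite !eqn_add2r => /eqP.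
  rewrite (mem_map inj).
  by have -> : a - l = (a - l.+1).+1 by lia.
apply/mapP => [[j js ej]].
have j0 : j = 0 by lia.
by subst j; move: js; apply/negP; apply: Iaux_no0.
Qed.

Lemma peel k : forall n (P Q : nat -> bool), k <= n -> (forall a, a < k -> Q a) ->
  W n Q < W n P ->
  (forall a, a < k -> P a) /\
  W (n - k) (fun a => Q (a + k)) < W (n - k) (fun a => P (a + k)).
Proof.
elim: k => [|k IH] n P Q kn hQ hW.
  split=> // ; rewrite subn0 (eq_W _ (fun a => Q (a + 0)) Q); last by move=> a; rewrite addn0.
  by rewrite (eq_W _ (fun a => P (a + 0)) P) // => a; rewrite addn0.
case: n kn hW => [|n] // kn /=.
have q0 := hQ 0 isT; rewrite q0.
case p0: (P 0) => /=; last first.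
  have := W_le n (fun a => Q a.+1); have := W_le n (fun a => P a.+1); lia.
rewrite ltn_add2l => hW.
have [h1 h2] := IH n (fun a => P a.+1) (fun a => Q a.+1) kn (fun a ha => hQ a.+1 ha) hW.
split.
  by case=> [|a] //= ha; apply: h1.
rewrite subSS (eq_W _ (fun a => Q (a + k.+1)) (fun a => Q (a + k).+1)); last by move=> a; rewrite addnS.
by rewrite (eq_W _ (fun a => P (a + k.+1)) (fun a => P (a + k).+1)) // => a; rewrite addnS.
Qed.

Lemma W0 n : W n (fun _ => false) = 0.
Proof. by elim: n => //= n ->. Qed.

Lemma core d : 0 < d -> forall n (P : nat -> bool), W n (Qd d) < W n P ->
  exists t : nat -> nat, forall I : nat -> bool, (exists2 i, i < d & I i) ->
    P (vmod n (\sum_(0 <= i < d | I i) t i)).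
Proof.
elim/ltn_ind: d => d IH d0 n P hW.
case: (ltnP 1 d) => d1; last first.
  have e1 : d = 1 by lia.
  subst d.
  move: hW; rewrite (eq_W _ _ (fun _ => false)) // W0 => /W_pos [a an pa].
  exists (fun _ => 2 ^ a) => I [i i1 Ii].
  have i0 : i = 0 by lia.
  subst i; by rewrite big_mkcond big_nat1 Ii vmod_pow.
have [ha hb hc] := tl_facts d d1.
set l := trunc_log 2 d in ha hb hc.
case HA: (all P (iota 0 (minn l n).+1)).
  exists (fun _ => 1) => I [i id Ii].
  rewrite sum1_count.
  set m := count I _.
  have m0 : 0 < m.
    rewrite -has_count; apply/hasP; exists i => //; rewrite mem_index_iota; lia.
  have md : m <= d.
    have := count_size I (index_iota 0 d); rewrite size_iota; lia.
  move/allP: HA => HA.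
  rewrite /vmod; case: ifP => hd.
    have : 2 ^ n <= m by apply: dvdn_leq.
    move=> h.
    have nl : n <= l.
      rewrite -ltnS -(ltn_exp2l _ _ (isT : 1 < 2)); lia.
    apply: HA; rewrite mem_iota; lia.
  set L := logn 2 m.
  have hL : 2 ^ L <= m by apply: dvdn_leq => //; rewrite pfactor_dvdn.
  have Ll : L <= l.
    rewrite -ltnS -(ltn_exp2l _ _ (isT : 1 < 2)); lia.
  have Ln : L < n.
    rewrite ltnNge; apply/negP => h; by move: hd; rewrite pfactor_dvdn // h.
  apply: HA; rewrite mem_iota; lia.
have hQl : forall a, a < l -> Qd d a by move=> a al; rewrite Qd_rec // al.
have [ln|nl] := ltnP l n; last first.
  have [h1 h2] := peel n n P (Qd d) (leqnn n)
     (fun a ha => hQl a (leq_trans ha nl)) hW.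
  move: h2; rewrite subnn /= add0n => h2.
  have Pn : P n by case: (P n) h2; case: (Qd d n).
  move/negP: HA; elim; apply/allP => a; rewrite mem_iota add0n ltnS => /andP [_ ha2].
  move: ha2; have -> : minn l n = n by lia.
  rewrite leq_eqVlt => /orP [/eqP -> //|]; exact: h1.
have [h1 h2] := peel l n P (Qd d) (ltnW ln) hQl hW.
have e : n - l = (n - l.+1).+1 by lia.
move: h2; rewrite e /= add0n.
have -> : Qd d l = false by rewrite Qd_rec // ltnn.
case Pl: (P l).
  move/negP: HA; elim; apply/allP => a; rewrite mem_iota add0n ltnS => /andP [_ ha2].
  move: ha2; have -> : minn l n = l by lia.
  rewrite leq_eqVlt => /orP [/eqP -> //|]; exact: h1.
rewrite /= !add0n => hW'.
set d' := d - 2 ^ l + 1.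
have h2l : 2 <= 2 ^ l by rewrite -{1}(expn1 2) leq_exp2l.
have d'd : d' < d by rewrite /d'; lia.
have d'0 : 0 < d' by rewrite /d'; lia.
set n' := n - l.+1.
set P' := fun a => P (a.+1 + l).
have hW2 : W n' (Qd d') < W n' P'.
  move: hW'; rewrite (eq_W _ (fun a => Qd d (a.+1 + l)) (Qd d')) //.
  move=> a; rewrite Qd_rec // -/l.
  have -> : (a.+1 + l < l) = false by lia.
  have -> : (l < a.+1 + l) = true by lia.
  by have -> : a.+1 + l - l.+1 = a by lia.
have [t' ht'] := IH d' d'd d'0 n' P' hW2.
set c := 2 ^ l - 1.
exists (fun i => if i < c then 1 else 2 ^ l.+1 * t' (i - c)) => I [i id Ii].
have edc : d = c + d' by rewrite /c /d'; lia.
rewrite (@big_cat_nat _ _ _ c) /=; [|lia|lia].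
rewrite big_nat_cond (eq_bigr (fun _ => 1)); last first.
  by move=> j /andP [/andP [_ ->]].
rewrite -big_nat_cond sum1_count.
rewrite -{2}(add0n c) big_addn.
have -> : d - c = d' by lia.
rewrite (eq_bigr (fun j => 2 ^ l.+1 * t' j)); last first.
  move=> j _; have -> : (j + c < c) = false by lia.
  by rewrite addnK.
rewrite -big_distrr /=.
set m := count _ _; set s := \sum_(_ <= _ < _ | _) _.
case hI: (has I (index_iota 0 c)).
  have m0 : 0 < m by rewrite -has_count.
  have mc : m < 2 ^ l.
    have := count_size I (index_iota 0 c); rewrite size_iota /m; lia.
  have -> : 2 ^ l.+1 * s = 2 ^ l * s.*2 by rewrite expnS -mulnA mulnCA mul2n.
  have [-> hL] := vmod_small n l m s.*2 m0 mc (ltnW ln).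
  by apply: h1.
have -> : m = 0.
  by apply/eqP; rewrite -leqn0 leqNgt -has_count hI.
rewrite add0n.
have := vmod_mul l.+1 n' s; rewrite /n' subnKC // => ->.
have : P' (vmod n' s).
  apply: ht'; exists (i - c).
    lia.
  have ic : c <= i.
    rewrite leqNgt; apply/negP => ic; move/negP: hI; apply; apply/hasP; exists i => //.
    by rewrite mem_index_iota.
  by rewrite subnK.
by rewrite /P' addSn addnC.
Qed.

Theorem claim3p2 (d n : nat) (S : {set 'I_(2 ^ n)}) :
  0 < d -> d <= n -> union_of_layers S -> #|Cset n d| < #|S| ->
  has_proj_cube d S.
Proof.
move=> d0 _ [J [_ ->]].
rewrite /Cset !card_layers => hW.
have [t' ht'] := @core d d0 n (fun a => a.+1 \in J) hW.
have p0 : 0 < 2 ^ n by rewrite expn_gt0.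
exists (fun i : 'I_d => Ordinal (ltn_pmod (t' i) p0)) => I hI.
set sum := \sum_(i in I) _.
exists (Ordinal (ltn_pmod sum p0)); last by [].
rewrite mem_bigcup_layers /= vmod_mod.
pose Ip k := [exists j : 'I_d, (val j == k) && (j \in I)].
have e1 : \sum_(0 <= i < d | Ip i) t' i = \sum_(i in I) t' i.
  rewrite big_mkord; apply: eq_bigl => i; rewrite /Ip.
  apply/existsP/idP => [[j /andP [/eqP /val_inj -> //]]|hi].
  by exists i; rewrite eqxx hi.
have : (vmod n (\sum_(0 <= i < d | Ip i) t' i)).+1 \in J.
  apply: ht'.
  case/set0Pn: hI => i hi; exists (val i); first exact: ltn_ord.
  by rewrite /Ip; apply/existsP; exists i; rewrite eqxx hi.
congr (_.+1 \in J); apply: vmod_eqmod.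
rewrite e1 /sum /=.
by rewrite [RHS]modn_summ.
Qed.
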